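(* Let $p\ge2$, $\mathcal K>0$, let $a\colon\mathbb{R}^{Nn}\to\mathbb{R}^{Nn}$ be $C^1$ and let $\omega\colon[0,\infty)\to[0,\infty)$ be bounded with $\lim_{s\to\infty}\omega(s)=0$ and $|Da(\xi)-Db(\xi)|\le\omega(|\xi|)(1+|\xi|)^{p-2}$ for all $\xi$, where $b(\xi)=\mathcal K|\xi|^{p-2}\xi$. Let $\beta\in(0,1)$, $\rho\in(0,1]$, $B=B^+_\rho(x_o)$, and let $\Psi\in C^{0;\beta}(B,\mathbb{R}^{n\times n})$, $G\in C^{0;\beta}(B,\mathbb{R}^{Nn})$. Then for every $x\in B$ and all $\xi,\xi_o,\zeta\in\mathbb{R}^{Nn}$, $$\big|\langle a((\xi+G(x))\Psi(x)),\zeta\Psi(x)\rangle-\langle a((\xi_o+G(x_o))\Psi(x_o)),\zeta\Psi(x_o)\rangle\big|\le c\Big[\big(1+|\xi_o|^2+|\xi-\xi_o|^2\big)^{\frac{p-2}2}|\xi-\xi_o|+\rho^\beta(1+|\xi_o|)^{p-1}\Big]|\zeta|$$ with $c$ depending on $p,\mathcal K,|a(0)|,\|\omega\|_\infty,\|\Psi\|_{C^{0;\beta}(B)},\|G\|_{C^{0;\beta}(B)}$.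
   Context: $B^+_\rho(x_o)=B_\rho(x_o)\cap\{x_n>0\}$ (no requirement $(x_o)_n=0$). $\|v\|_{C^{0;\beta}(B)}=\sup_B|v|+\sup_{x\ne y\in B}\frac{|v(x)-v(y)|}{|x-y|^\beta}$. *)

(* Defs.v *)
From HB Require Import structures.
From mathcomp Require Import all_boot all_order all_algebra.
From mathcomp Require Import all_classical all_reals all_analysis.
Set Implicit Arguments. Unset Strict Implicit. Unset Printing Implicit Defensive.
Import Order.TTheory GRing.Theory Num.Theory.
Import numFieldNormedType.Exports.
Local Open Scope ring_scope.

(* Euclidean (Frobenius) norm on m x k real matrices; row vectors 'rV_n are
   points of R^n, so fnorm (x - y) is the Euclidean distance in R^n. *)
Definition fnorm (R : realType) (m k : nat) (A : 'M[R]_(m, k)) : R :=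
  Num.sqrt (\sum_(i < m) \sum_(j < k) A i j ^+ 2).

Definition mxdot (R : realType) (m k : nat) (A B : 'M[R]_(m, k)) : R :=
  \sum_(i < m) \sum_(j < k) A i j * B i j.

(* last coordinate x_n of x in R^n (0 when n = 0). *)
Definition lastc (R : realType) (n : nat) (x : 'rV[R]_n) : R :=
  \sum_(i < n | (i : nat) == n.-1) x 0 i.

Definition halfball (R : realType) (n : nat) (xo : 'rV[R]_n) (rho : R)
  (x : 'rV[R]_n) : Prop :=
  fnorm (x - xo) < rho /\ 0 < lastc x.

(* its closure {|x - xo| <= rho, x_n >= 0} (valid when (xo)_n >= 0, rho > 0) *)
Definition halfball_cl (R : realType) (n : nat) (xo : 'rV[R]_n) (rho : R)
  (x : 'rV[R]_n) : Prop :=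
  fnorm (x - xo) <= rho /\ 0 <= lastc x.

(* "v belongs to C^{0;beta}(S) and ||v||_{C^{0;beta}(S)} <= P", where
   ||v|| = sup_S |v| + sup_{x<>y in S} |v x - v y| / |x - y|^beta. *)
Definition holder_le (R : realType) (n m k : nat) (beta : R)
  (S : 'rV[R]_n -> Prop) (v : 'rV[R]_n -> 'M[R]_(m, k)) (P : R) : Prop :=
  exists M0 M1 : R, M0 + M1 <= P /\
    (forall x, S x -> fnorm (v x) <= M0) /\
    (forall x y, S x -> S y -> x != y ->
       fnorm (v x - v y) <= M1 * fnorm (x - y) `^ beta).

Definition bmap (R : realType) (N n : nat) (K p : R) (xi : 'M[R]_(N, n))
  : 'M[R]_(N, n) := (K * fnorm xi `^ (p - 2)) *: xi.

(* Main.v *)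
Require Import Defs.
From HB Require Import structures.
From mathcomp Require Import all_boot all_order all_algebra.
From mathcomp Require Import all_classical all_reals all_analysis.
From mathcomp Require Import ring lra.
Import Order.TTheory GRing.Theory Num.Theory.
Import numFieldNormedType.Exports.
Local Open Scope ring_scope.

Section Norms.
Context {R : realType}.

Lemma sum_sq_ge0 (I : finType) (x : I -> R) : 0 <= \sum_i x i ^+ 2.
Proof. by apply: sumr_ge0 => i _; rewrite sqr_ge0. Qed.

Lemma cs_sq (I : finType) (x y : I -> R) :
  (\sum_i x i * y i) ^+ 2 <= (\sum_i x i ^+ 2) * (\sum_i y i ^+ 2).
Proof.
set a := \sum_i x i ^+ 2; set b := \sum_i y i ^+ 2; set c := \sum_i x i * y i.
have b0 : 0 <= b by apply: sum_sq_ge0.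
have [bz|bp] := eqVneq b 0.
  have yz : forall i, y i = 0.
    move=> i; have /psumr_eq0P H : b = 0 := bz.
    by apply/eqP; rewrite -sqrf_eq0; apply/eqP; apply: H => // j _; rewrite sqr_ge0.
  rewrite /c big1 ?expr0n ?bz ?mulr0 // => i _; by rewrite yz mulr0.
have bpos : 0 < b by rewrite lt_def bp b0.
have E : \sum_i (b * x i - c * y i) ^+ 2 = b * (a * b - c ^+ 2).
  rewrite (eq_bigr (fun i => b^+2 * x i ^+ 2 + (- (2 * b * c)) * (x i * y i)
       + c ^+ 2 * y i ^+ 2)); last by move=> i _; ring.
  rewrite !big_split /= -!mulr_sumr -/a -/b -/c; ring.
have : 0 <= b * (a * b - c ^+ 2) by rewrite -E sum_sq_ge0.
by rewrite pmulr_rge0 // subr_ge0.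
Qed.

Lemma cs_abs (I : finType) (x y : I -> R) :
  `|\sum_i x i * y i| <= Num.sqrt (\sum_i x i ^+ 2) * Num.sqrt (\sum_i y i ^+ 2).
Proof.
rewrite -sqrtrM ?sum_sq_ge0 // -sqrtr_sqr; apply: ler_wsqrtr.
exact: cs_sq.
Qed.

Lemma vtri (I : finType) (x y : I -> R) :
  Num.sqrt (\sum_i (x i + y i) ^+ 2) <=
  Num.sqrt (\sum_i x i ^+ 2) + Num.sqrt (\sum_i y i ^+ 2).
Proof.
set a := \sum_i x i ^+ 2; set b := \sum_i y i ^+ 2.
have a0 : 0 <= a by apply: sum_sq_ge0.
have b0 : 0 <= b by apply: sum_sq_ge0.
have E : \sum_i (x i + y i) ^+ 2 = a + 2 * (\sum_i x i * y i) + b.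
  rewrite (eq_bigr (fun i => x i ^+ 2 + 2 * (x i * y i) + y i ^+ 2)); last by move=> i _; ring.
  by rewrite !big_split /= -mulr_sumr.
rewrite E -[X in _ <= X]ger0_norm ?addr_ge0 ?sqrtr_ge0 // -sqrtr_sqr.
apply: ler_wsqrtr.
have H := @cs_abs _ x y; rewrite -/a -/b in H.
have H2 : \sum_i x i * y i <= Num.sqrt a * Num.sqrt b.
  by apply: le_trans H; apply: ler_norm.
rewrite sqrrD !sqr_sqrtr //; nra.
Qed.

End Norms.

Section Mx.
Context {R : realType} {m k : nat}.
Implicit Types A B C : 'M[R]_(m, k).

Lemma fnormE A : fnorm A = Num.sqrt (\sum_(q : 'I_m * 'I_k) A q.1 q.2 ^+ 2).
Proof. by rewrite /fnorm pair_big. Qed.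

Lemma mxdotE A B : mxdot A B = \sum_(q : 'I_m * 'I_k) A q.1 q.2 * B q.1 q.2.
Proof. by rewrite /mxdot pair_big. Qed.

Lemma fnorm_ge0 A : 0 <= fnorm A.
Proof. exact: sqrtr_ge0. Qed.

Lemma fnorm_sqr A : fnorm A ^+ 2 = \sum_(q : 'I_m * 'I_k) A q.1 q.2 ^+ 2.
Proof. by rewrite fnormE sqr_sqrtr // sum_sq_ge0. Qed.

Lemma mxdot_le A B : `|mxdot A B| <= fnorm A * fnorm B.
Proof. by rewrite mxdotE !fnormE; apply: cs_abs. Qed.

Lemma fnormD A B : fnorm (A + B) <= fnorm A + fnorm B.
Proof.
rewrite !fnormE (eq_bigr (fun q => (A q.1 q.2 + B q.1 q.2) ^+ 2)).
  exact: (@vtri _ _ (fun q => A q.1 q.2) (fun q => B q.1 q.2)).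
by move=> q _; rewrite mxE.
Qed.

Lemma fnormZ (c : R) A : fnorm (c *: A) = `|c| * fnorm A.
Proof.
rewrite !fnormE (eq_bigr (fun q => c ^+ 2 * A q.1 q.2 ^+ 2)).
  by rewrite -mulr_sumr sqrtrM ?sqr_ge0 // sqrtr_sqr.
by move=> q _; rewrite mxE exprMn.
Qed.

Lemma fnormN A : fnorm (- A) = fnorm A.
Proof. by rewrite -scaleN1r fnormZ normrN normr1 mul1r. Qed.

Lemma fnormB A B : fnorm (A - B) <= fnorm A + fnorm B.
Proof. by rewrite -(fnormN B); apply: fnormD. Qed.

Lemma fnorm0 : fnorm (0 : 'M[R]_(m, k)) = 0.
Proof. by rewrite -(scale0r 0) fnormZ normr0 mul0r. Qed.

Lemma fnorm_eq0 A : fnorm A = 0 -> A = 0.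
Proof.
move=> H; have : fnorm A ^+ 2 = 0 by rewrite H expr0n.
rewrite fnorm_sqr => H1; apply/matrixP => i j; rewrite mxE.
apply/eqP; rewrite -sqrf_eq0; apply/eqP.
have H0 : forall q : 'I_m * 'I_k, true -> 0 <= A q.1 q.2 ^+ 2 by move=> q _; exact: sqr_ge0.
exact: (@psumr_eq0P _ _ _ _ H0 H1 (i, j) isT).
Qed.

Lemma fnorm_gt0 A : A != 0 -> 0 < fnorm A.
Proof.
move=> HA; rewrite lt_def fnorm_ge0 andbT; apply/eqP => H.
by move: HA; rewrite (fnorm_eq0 _ H) eqxx.
Qed.

Lemma mxdotBl A B C : mxdot (A - B) C = mxdot A C - mxdot B C.
Proof.
rewrite !mxdotE -sumrB; apply: eq_bigr => q _; rewrite !mxE; ring.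
Qed.

Lemma mxdotDl A B C : mxdot (A + B) C = mxdot A C + mxdot B C.
Proof.
rewrite !mxdotE -big_split; apply: eq_bigr => q _; rewrite !mxE; by rewrite mulrDl.
Qed.

Lemma mxdotBr A B C : mxdot C (A - B) = mxdot C A - mxdot C B.
Proof.
rewrite !mxdotE -sumrB; apply: eq_bigr => q _; rewrite !mxE; ring.
Qed.

Lemma mxdotZl (c : R) A B : mxdot (c *: A) B = c * mxdot A B.
Proof.
rewrite !mxdotE mulr_sumr; apply: eq_bigr => q _; rewrite !mxE; ring.
Qed.

Lemma mxdot_sym A B : mxdot A B = mxdot B A.
Proof. by rewrite !mxdotE; apply: eq_bigr => q _; rewrite mulrC. Qed.

Lemma mxdot_self A : mxdot A A = fnorm A ^+ 2.
Proof. by rewrite mxdotE fnorm_sqr; apply: eq_bigr => q _; rewrite expr2. Qed.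

Lemma entry_le_mxnorm A i j : `|A i j| <= `|A|.
Proof.
rewrite [X in _ <= X]/Num.Def.normr /= mx_normrE.
exact: (le_bigmax _ _ (i, j)).
Qed.

Lemma fnorm_le_mxnorm A : fnorm A <= Num.sqrt ((m * k)%:R) * `|A|.
Proof.
rewrite fnormE; have -> : `|A| = Num.sqrt (`|A| ^+ 2) by rewrite sqrtr_sqr normr_id.
rewrite -sqrtrM //.
apply: ler_wsqrtr.
apply: le_trans (_ : \sum_(q : 'I_m * 'I_k) `|A| ^+ 2 <= _).
  apply: ler_sum => q _; rewrite -real_normK ?num_real //.
  by rewrite lerXn2r ?nnegrE // entry_le_mxnorm.
by rewrite sumr_const card_prod !card_ord mulr_natl.
Qed.

End Mx.

Lemma fnorm_mul (R : realType) (a b c : nat) (A : 'M[R]_(a, b)) (B : 'M[R]_(b, c)) :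
  fnorm (A *m B) <= fnorm A * fnorm B.
Proof.
rewrite /fnorm -sqrtrM; last by apply: sumr_ge0 => i _; apply: sum_sq_ge0.
apply: ler_wsqrtr.
apply: le_trans (_ : \sum_(i < a) \sum_(l < c)
   ((\sum_(j < b) A i j ^+ 2) * (\sum_(j < b) B j l ^+ 2)) <= _).
  apply: ler_sum => i _; apply: ler_sum => l _; rewrite mxE.
  exact: (@cs_sq _ _ (fun j => A i j) (fun j => B j l)).
rewrite mulr_suml; apply: ler_sum => i _.
rewrite -mulr_sumr; rewrite exchange_big /=.
by [].
Qed.

Section Bmap.
Variable R : realType.
Variables N n : nat.
Local Notation V := 'M[R]_(N, n).

Definition coordf (i : 'I_N) (j : 'I_n) : V -> R := fun xi => xi i j.

Definition Qf : V -> R := \sum_(i < N) \sum_(j < n) (coordf i j) ^+ 2.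

Lemma QfE xi : Qf xi = \sum_(i < N) \sum_(j < n) xi i j ^+ 2.
Proof.
rewrite /Qf fct_sumE; apply: eq_bigr => i _; rewrite fct_sumE.
by apply: eq_bigr => j _; rewrite exprfctE.
Qed.

Lemma Qf_fnorm xi : Qf xi = fnorm xi ^+ 2.
Proof. by rewrite QfE /fnorm sqr_sqrtr //; apply: sumr_ge0 => i _; apply: sum_sq_ge0. Qed.

Lemma coord_diff (xi : V) i j : differentiable (coordf i j) xi.
Proof. exact: differentiable_coord. Qed.

Lemma coord_D (eta v : V) i j : 'D_v (coordf i j) eta = v i j.
Proof.
have := @derive_mx R V N n id eta v (@derivable_id R V eta v); rewrite derive_id => /matrixP /(_ i j).
by rewrite mxE.
Qed.

Lemma Qf_diff (xi : V) : differentiable Qf xi.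
Proof.
apply: differentiable_sum => i; apply: differentiable_sum => j.
exact/differentiableX/coord_diff.
Qed.

Lemma Qf_D (eta v : V) : 'D_v Qf eta = 2 * mxdot eta v.
Proof.
rewrite /Qf derive_sum; last first.
  by move=> i; apply/diff_derivable/differentiable_sum => j;
     apply/differentiableX/coord_diff.
rewrite /mxdot mulr_sumr; apply: eq_bigr => i _.
rewrite derive_sum; last by move=> j; apply/diff_derivable/differentiableX/coord_diff.
rewrite mulr_sumr; apply: eq_bigr => j _.
rewrite deriveX; last exact/diff_derivable/coord_diff.
by rewrite coord_D /coordf expr1 /GRing.scale /=; ring.
Qed.

Variables K p : R.
Definition rr := (p - 2) / 2.
Definition Sf : V -> R := K *: ((fun q : R => q `^ rr) \o Qf).

Lemma SfE xi : Sf xi = K * Qf xi `^ rr.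
Proof. by []. Qed.

Lemma Sf_diff (eta : V) : 0 < Qf eta -> differentiable Sf eta.
Proof.
move=> Q0; apply: differentiableZ; apply: differentiable_comp; first exact: Qf_diff.
apply/derivable1_diffP; apply: derivable_powR; by rewrite in_itv /= Q0.
Qed.

Lemma Sf_D (eta v : V) : 0 < Qf eta ->
  'D_v Sf eta = K * (2 * mxdot eta v * (rr * Qf eta `^ (rr - 1))).
Proof.
move=> Q0; rewrite deriveE; last exact: Sf_diff.
rewrite diffZ; last first.
  apply: differentiable_comp; first exact: Qf_diff.
  apply/derivable1_diffP; apply: derivable_powR; by rewrite in_itv /= Q0.
rewrite /= diff_comp; first last.
- apply/derivable1_diffP; apply: derivable_powR; by rewrite in_itv /= Q0.
- exact: Qf_diff.
rewrite /= diff1E; last first.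
  apply/derivable1_diffP; apply: derivable_powR; by rewrite in_itv /= Q0.
rewrite powR_derive1; last by rewrite in_itv /= Q0.
by rewrite -deriveE ?Qf_D //; exact: Qf_diff.
Qed.

Definition B2 : V -> V :=
  \sum_(i < N) \sum_(j < n) (fun xi => (Sf xi * xi i j) *: delta_mx i j).

Lemma B2E xi : B2 xi = Sf xi *: xi.
Proof.
rewrite /B2 fct_sumE [X in _ = _ *: X](matrix_sum_delta xi) scaler_sumr; apply: eq_bigr => i _.
rewrite fct_sumE scaler_sumr; apply: eq_bigr => j _.
by rewrite scalerA.
Qed.

Lemma B2_diff (eta : V) : 0 < Qf eta -> differentiable B2 eta.
Proof.
move=> Q0; apply: differentiable_sum => i; apply: differentiable_sum => j.
apply: differentiableZl; apply: (@differentiableM _ _ Sf (coordf i j)).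
  exact: Sf_diff.
exact: coord_diff.
Qed.

Lemma B2_D (eta v : V) : 0 < Qf eta ->
  'D_v B2 eta = Sf eta *: v + 'D_v Sf eta *: eta.
Proof.
move=> Q0; rewrite derive_mx; last exact/diff_derivable/B2_diff.
apply/matrixP => i j; rewrite !mxE.
have -> : (fun t => B2 t i j) = Sf * coordf i j.
  by apply/funext => t; rewrite B2E mxE.
rewrite deriveM; first last.
- exact/diff_derivable/coord_diff.
- exact/diff_derivable/Sf_diff.
rewrite coord_D /coordf; rewrite [eta i j *: _]mulrC; by [].
Qed.

Lemma bmapE : bmap K p = fun xi => Sf xi *: xi.
Proof.
apply/funext => xi; rewrite /bmap SfE; congr (_ *: _); congr (_ * _).
have -> : fnorm xi = Qf xi `^ (2^-1).
  rewrite powR12_sqrt; last by rewrite Qf_fnorm sqr_ge0.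
  by rewrite Qf_fnorm sqrtr_sqr ger0_norm // fnorm_ge0.
by rewrite -powRrM /rr mulrC.
Qed.

Lemma bmap_d (eta v : V) : 0 < Qf eta -> 'd (bmap K p) eta v = 'D_v B2 eta.
Proof.
move=> Q0; rewrite deriveE; last exact: B2_diff.
suff -> : bmap K p = B2 by [].
by rewrite bmapE; apply/funext => xi; rewrite B2E.
Qed.

Lemma bmap_d_le (eta v : V) : 0 < K -> 2 <= p -> eta != 0 ->
  fnorm ('d (bmap K p) eta v) <= K * (p - 1) * fnorm eta `^ (p - 2) * fnorm v.
Proof.
move=> K0 p2 e0.
have f0 : 0 < fnorm eta by apply: fnorm_gt0.
have Q0 : 0 < Qf eta by rewrite Qf_fnorm exprn_gt0.
rewrite bmap_d // B2_D // Sf_D //.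
apply: (le_trans (fnormD _ _)); rewrite !fnormZ SfE.
have Qr : Qf eta `^ rr = fnorm eta `^ (p - 2).
  by rewrite Qf_fnorm -powR_mulrn ?fnorm_ge0 // -powRrM /rr; congr (_ `^ _); field.
have Qr1 : Qf eta `^ (rr - 1) * fnorm eta ^+ 2 = fnorm eta `^ (p - 2).
  rewrite -Qr -Qf_fnorm -{2}(powRr1 (ltW Q0)) -powRD; first by rewrite subrK.
  by rewrite (gt_eqF Q0) implybT.
have rr0 : 0 <= rr by rewrite /rr divr_ge0 // subr_ge0.
have md := mxdot_le eta v.
rewrite (@ger0_norm _ (K * Qf eta `^ rr)); last by rewrite mulr_ge0 ?powR_ge0 // ltW.
rewrite Qr.
set q := Qf eta `^ (rr - 1).
have hP : 0 <= q by rewrite powR_ge0.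
have HE : `|K * (2 * mxdot eta v * (rr * q))| = K * (2 * rr * q) * `|mxdot eta v|.
  rewrite (_ : K * (2 * mxdot eta v * (rr * q)) = (K * (2 * rr * q)) * mxdot eta v);
    last by ring.
  rewrite normrM ger0_norm //; apply: mulr_ge0; [exact: ltW | apply: mulr_ge0 => //; apply: mulr_ge0 => //; lra].

rewrite HE.
have HE2 : 2 * rr = p - 2 by rewrite /rr; field.
set a := `|mxdot eta v|; set b := fnorm eta; set c := fnorm v.
have a0 : 0 <= a by rewrite normr_ge0.
have c0 : 0 <= c by rewrite fnorm_ge0.
have H1 : K * (2 * rr * q) * a * b <= K * (2 * rr * q) * (b * c) * b.
  apply: ler_wpM2r; first exact: fnorm_ge0.
  apply: ler_wpM2l => //; rewrite !mulr_ge0 //; lra.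
apply: (le_trans (lerD (lexx _) H1)).
have -> : K * (2 * rr * q) * (b * c) * b = K * (2 * rr) * (q * b ^+ 2) * c by ring.
rewrite Qr1 HE2 -/b le_eqVlt; apply/orP; left; apply/eqP; ring.
Qed.

End Bmap.

Section DA.
Context {R : realType} {N n : nat}.
Local Notation V := 'M[R]_(N, n).

Lemma fnorm_delta (i : 'I_N) (j : 'I_n) : fnorm (delta_mx i j : V) = 1.
Proof.
rewrite /fnorm (bigD1 i) //= (bigD1 j) //= big1; last first.
  by move=> j' Hj; rewrite mxE eqxx (negbTE Hj) /= expr0n.
rewrite big1; last first.
  move=> i' Hi; apply: big1 => j' _; by rewrite mxE (negbTE Hi) /= expr0n.
by rewrite mxE !eqxx /= expr1n !addr0 sqrtr1.
Qed.

Lemma mxnorm_delta (i : 'I_N) (j : 'I_n) : `|(delta_mx i j : V)| <= 1.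
Proof.
rewrite [X in X <= _]/Num.Def.normr /= mx_normrE.
apply: bigmax_le => // q _; rewrite mxE.
by case: (_ && _); rewrite ?normr1 ?normr0.
Qed.

End DA.
Section DA2.
Context {R : realType} {N n : nat}.
Local Notation V := 'M[R]_(N, n).

Lemma powR_ge1 (x y : R) : 1 <= x -> 0 <= y -> 1 <= x `^ y.
Proof.
move=> x1 y0; rewrite -(powRr0 x); exact: ler_powR.
Qed.

Lemma DA (a : V -> V) (omega : R -> R) (W K p : R) :
  0 < K -> 2 <= p ->
  (forall zeta, continuous (fun xi => ('d a xi : V -> V) zeta)) ->
  (forall s, 0 <= s -> 0 <= omega s <= W) ->
  (forall xi zeta, fnorm (('d a xi : V -> V) zeta - ('d (bmap K p) xi : V -> V) zeta)
       <= omega (fnorm xi) * (1 + fnorm xi) `^ (p - 2) * fnorm zeta) ->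
  forall eta v, fnorm (('d a eta : V -> V) v) <=
     (K * (p - 1) + W) * 2 `^ (p - 2) * (1 + fnorm eta) `^ (p - 2) * fnorm v.
Proof.
move=> K0 p2 Hc Hw Hd.
have W0 : 0 <= W by have /andP[h1 h2] := Hw 0 (lexx 0); apply: le_trans h2.
have C1 : 0 <= K * (p - 1) + W by apply: addr_ge0 => //; apply: mulr_ge0; lra.
have t1 : 1 <= 2 `^ (p - 2) :> R by apply: powR_ge1; lra.
have Hnz : forall eta v, eta != 0 -> fnorm (('d a eta : V -> V) v) <=
     (K * (p - 1) + W) * (1 + fnorm eta) `^ (p - 2) * fnorm v.
  move=> eta v e0.
  have -> : ('d a eta : V -> V) v = ('d (bmap K p) eta : V -> V) v +
     (('d a eta : V -> V) v - ('d (bmap K p) eta : V -> V) v) by rewrite addrC subrK.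
  apply: (le_trans (fnormD _ _)).
  have h1 := @bmap_d_le R N n K p eta v K0 p2 e0.
  have h2 := Hd eta v.
  have hw := Hw (fnorm eta) (fnorm_ge0 _).
  have hp : fnorm eta `^ (p - 2) <= (1 + fnorm eta) `^ (p - 2).
    have hf := fnorm_ge0 eta; apply: ge0_ler_powR; rewrite ?nnegrE; lra.
  have hp0 : 0 <= fnorm eta `^ (p - 2) by apply: powR_ge0.
  have hv := fnorm_ge0 v.
  set X := (1 + fnorm eta) `^ (p - 2) in hp h2 *.
  set Y := fnorm eta `^ (p - 2) in hp hp0 h1.
  set om := omega (fnorm eta) in hw h2.
  have Kp : 0 <= K * (p - 1) by apply: mulr_ge0; lra.
  move/andP: hw => [om0 omW].
  have : K * (p - 1) * Y * fnorm v <= K * (p - 1) * X * fnorm v.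
    by apply: ler_wpM2r => //; apply: ler_wpM2l.
  have : om * X * fnorm v <= W * X * fnorm v.
    apply: ler_wpM2r => //; apply: ler_wpM2r => //; rewrite /X powR_ge0 //.
  move=> ha hb; apply: (le_trans (lerD h1 h2)); rewrite mulrDl mulrDl.
  by apply: lerD.
move=> eta v.
have hp0 : 0 <= (1 + fnorm eta) `^ (p - 2) by apply: powR_ge0.
have [e0|e0] := eqVneq eta 0; last first.
  apply: (le_trans (Hnz _ _ e0)); apply: ler_wpM2r; first exact: fnorm_ge0.
  apply: ler_wpM2r => //; rewrite -{1}(mulr1 (_ + _)); exact: ler_wpM2l.
rewrite e0 fnorm0 addr0 powR1 mulr1; clear hp0 e0 eta.
case: N a Hc Hd Hnz v => [|N'] a Hc Hd Hnz v.
  rewrite {1}/fnorm big_ord0 sqrtr0; apply: mulr_ge0; first exact: mulr_ge0.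
  exact: fnorm_ge0.
case: n a Hc Hd Hnz v => [|n'] a Hc Hd Hnz v.
  rewrite {1}/fnorm big1 ?sqrtr0; last by move=> i _; rewrite big_ord0.
  apply: mulr_ge0; first exact: mulr_ge0.
  exact: fnorm_ge0.
set f := fun xi => ('d a xi : 'M[R]_(N'.+1, n'.+1) -> _) v.
set M := (N'.+1 * n'.+1)%:R : R.
have sM : 0 <= Num.sqrt M by apply: sqrtr_ge0.
apply/ler_addgt0Pr => e ep.
have e'p : 0 < e / (Num.sqrt M + 1) by apply: divr_gt0 => //; lra.
have := (cvgrPdist_lt _ _).1 (Hc v 0) _ e'p.
move=> Hn; have [d d0 Hdd] := nbhs_norm0P.1 (Hn _).
set t := Order.min (d / 2) 1.
have t0 : 0 < t by rewrite /t lt_min; apply/andP; split => //; apply: divr_gt0.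
have t1' : t <= 1 by rewrite /t ge_min lexx orbT.
have hd2 : d / 2 < d by rewrite ltr_pdivrMr // ltr_pMr // ltr1n.
have td : t < d by rewrite /t gt_min hd2.
set E := (delta_mx ord0 ord0 : 'M[R]_(N'.+1, n'.+1)).
set xi := t *: E.
have xin : xi != 0.
  apply/eqP => /matrixP /(_ ord0 ord0); rewrite !mxE !eqxx /= mulr1 => h.
  by move: t0; rewrite h ltxx.
have xif : fnorm xi = t by rewrite /xi fnormZ fnorm_delta mulr1 gtr0_norm.
have xid : `|xi| < d.
  rewrite /xi normrZ gtr0_norm //; apply: (le_lt_trans _ td).
  by rewrite -{2}(mulr1 t); apply: ler_wpM2l; [exact: ltW | exact: mxnorm_delta].
have Hx := Hdd xi xid.
have Hb := Hnz xi v xin.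
rewrite xif in Hb.
have Hp : (1 + t) `^ (p - 2) <= 2 `^ (p - 2).
  apply: ge0_ler_powR; rewrite ?nnegrE; lra.
have -> : ('d a 0 : 'M[R]_(N'.+1, n'.+1) -> _) v = f xi + (f 0 - f xi).
  by rewrite addrC subrK.
apply: (le_trans (fnormD _ _)).
have H1 : fnorm (f 0 - f xi) <= e.
  apply: (le_trans (fnorm_le_mxnorm _)).
  have hM : 0 < Num.sqrt M + 1 by lra.
  have : Num.sqrt M * `|f 0 - f xi| <= Num.sqrt M * (e / (Num.sqrt M + 1)).
    by apply: ler_wpM2l => //; apply: ltW.
  move=> h; apply: (le_trans h).
  rewrite mulrA ler_pdivrMr // mulrDr mulr1; have := ltW ep; lra.
have H2 : fnorm (f xi) <= (K * (p - 1) + W) * 2 `^ (p - 2) * fnorm v.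
  apply: (le_trans Hb); apply: ler_wpM2r; first exact: fnorm_ge0.
  exact: ler_wpM2l.
by apply: lerD.
Qed.

End DA2.

Section MV.
Context {R : realType} {N n : nat}.
Local Notation V := 'M[R]_(N, n).

Lemma line_quot (a : V -> V) (e0 w : V) (t : R) :
  (fun h : R => h^-1 *: (((fun s : R => a (e0 + s *: w)) \o shift t) (h *: 1)
       - (fun s : R => a (e0 + s *: w)) t)) =
  (fun h : R => h^-1 *: ((a \o shift (e0 + t *: w)) (h *: w) - a (e0 + t *: w))).
Proof.
apply/funext => h /=; congr (_ *: (a _ - _)).
by rewrite [_%:A]mulr1 scalerDl addrCA.
Qed.

Lemma line_derivable (a : V -> V) (e0 w : V) (t : R) :
  derivable a (e0 + t *: w) w -> derivable (fun s : R => a (e0 + s *: w)) t 1.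
Proof. by rewrite /derivable line_quot. Qed.

Lemma line_derive (a : V -> V) (e0 w : V) (t : R) :
  'D_1 (fun s : R => a (e0 + s *: w)) t = 'D_w a (e0 + t *: w).
Proof. by rewrite /derive line_quot. Qed.

Lemma phi_derive (a : V -> V) (e0 w M : V) (t : R) :
  (forall xi, differentiable a xi) ->
  is_derive t 1 (fun s : R => mxdot (a (e0 + s *: w)) M)
     (mxdot (('d a (e0 + t *: w) : V -> V) w) M).
Proof.
move=> Ha.
set G := fun s : R => a (e0 + s *: w).
have Gd : derivable G t 1 by apply: line_derivable; exact: diff_derivable.
have GD : 'D_1 G t = ('d a (e0 + t *: w) : V -> V) w.
  by rewrite /G line_derive deriveE.
set g := fun i j => fun s : R => G s i j.
have gd : forall i j, derivable (g i j) t 1.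
  by move=> i j; move: Gd => /derivable_mxP; apply.
have hd : is_derive t 1 (\sum_(i < N) \sum_(j < n) (M i j *: g i j))
   (\sum_(i < N) \sum_(j < n) M i j *: 'D_1 (g i j) t).
  apply: is_derive_sum => i; apply: is_derive_sum => j.
  apply: is_deriveZ; exact: derivableP.
have E1 : (fun s : R => mxdot (a (e0 + s *: w)) M) =
   \sum_(i < N) \sum_(j < n) (M i j *: g i j).
  apply/funext => s; rewrite /mxdot fct_sumE; apply: eq_bigr => i _.
  rewrite fct_sumE; apply: eq_bigr => j _.
  by rewrite /g /G /GRing.scale /= mulrC.
have E2 : mxdot (('d a (e0 + t *: w) : V -> V) w) M =
   \sum_(i < N) \sum_(j < n) M i j *: 'D_1 (g i j) t.
  rewrite -GD derive_mx //.
  rewrite /mxdot; apply: eq_bigr => i _; apply: eq_bigr => j _.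
  by rewrite mxE /GRing.scale /= mulrC.
by rewrite E1 E2.
Qed.
End MV.

Local Open Scope classical_set_scope.

Section MV2.
Context {R : realType} {N n : nat}.
Local Notation V := 'M[R]_(N, n).

Lemma MVbound (a : V -> V) (C0 p : R) : 2 <= p -> 0 <= C0 ->
  (forall xi, differentiable a xi) ->
  (forall eta v, fnorm (('d a eta : V -> V) v) <= C0 * (1 + fnorm eta) `^ (p - 2) * fnorm v) ->
  forall e0 w M : V, `|mxdot (a (e0 + w)) M - mxdot (a e0) M| <=
     C0 * (1 + fnorm e0 + fnorm w) `^ (p - 2) * fnorm w * fnorm M.
Proof.
move=> p2 C00 Ha HD e0 w M.
set phi := fun s : R => mxdot (a (e0 + s *: w)) M.
have Hd : forall x : R, x \in `]0, 1[%R -> is_derive x 1 phi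
    (mxdot (('d a (e0 + x *: w) : V -> V) w) M).
  by move=> x _; apply: phi_derive.
have Hcont : {within `[0, 1], continuous phi}.
  apply: derivable_within_continuous => x _.
  have [h _] := phi_derive a e0 w M x Ha. exact: h.
have [c c01 Hc] := MVT_segment ler01 Hd Hcont.
have -> : mxdot (a (e0 + w)) M - mxdot (a e0) M = phi 1 - phi 0.
  by rewrite /phi scale1r scale0r addr0.
rewrite Hc subr0 mulr1.
apply: (le_trans (mxdot_le _ _)).
apply: ler_wpM2r; first exact: fnorm_ge0.
apply: (le_trans (HD _ _)).
apply: ler_wpM2r; first exact: fnorm_ge0.
apply: ler_wpM2l => //.
move: c01; rewrite in_itv /= => /andP [c0 c1].
have hf := fnorm_ge0 (e0 + c *: w).
apply: ge0_ler_powR; rewrite ?nnegrE; try lra.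
- have := fnorm_ge0 e0; have := fnorm_ge0 w; lra.
- have h1 := fnormD e0 (c *: w).
  rewrite fnormZ ger0_norm // in h1.
  have := fnorm_ge0 w; nra.
Qed.
End MV2.

Section Key.
Context {R : realType}.

Lemma eqle (x y : R) : x = y -> x <= y.
Proof. by move=> ->. Qed.

Lemma powR_mono (a b e : R) : 0 <= e -> 0 <= a -> a <= b -> a `^ e <= b `^ e.
Proof.
move=> e0 a0 ab; apply: ge0_ler_powR => //; rewrite nnegrE //; exact: le_trans ab.
Qed.

Lemma powR_ge1' (x y : R) : 1 <= x -> 0 <= y -> 1 <= x `^ y.
Proof. move=> x1 y0; rewrite -(powRr0 x); exact: ler_powR. Qed.

Lemma powR_S (x e : R) : 0 < x -> x `^ e * x = x `^ (e + 1).
Proof.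
move=> x0; rewrite powRD ?powRr1 //; first exact: ltW.
by rewrite implybE (gt_eqF x0) orbT.
Qed.

Lemma key (p s d r : R) : 2 <= p -> 0 <= s -> 0 <= d -> 0 <= r -> r <= 1 ->
  (1 + s + d) `^ (p - 2) * (d + (1 + s) * r) <=
  2 * 3 `^ (p - 2) * ((1 + s ^+ 2 + d ^+ 2) `^ ((p - 2) / 2) * d + r * (1 + s) `^ (p - 1)).
Proof.
move=> p2 s0 d0 r0 r1.
set U := 1 + s + d; set S := 1 + s; set q := 1 + s ^+ 2 + d ^+ 2.
set X := q `^ ((p - 2) / 2) * d; set Y := r * S `^ (p - 1).
have p20 : 0 <= p - 2 by lra.
have t3 : 1 <= 3 `^ (p - 2) :> R by apply: powR_ge1'; lra.
have X0 : 0 <= X by rewrite /X mulr_ge0 // powR_ge0.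
have Y0 : 0 <= Y by rewrite /Y mulr_ge0 // powR_ge0.
have U0 : 0 <= U `^ (p - 2) by apply: powR_ge0.
have Ha : U `^ (p - 2) <= 3 `^ (p - 2) * q `^ ((p - 2) / 2).
  have -> : U `^ (p - 2) = (U ^+ 2) `^ ((p - 2) / 2).
    rewrite -powR_mulrn; last by rewrite /U; lra.
    by rewrite -powRrM; congr (_ `^ _); field.
  apply: (@le_trans _ _ ((3 * q) `^ ((p - 2) / 2))).
    apply: powR_mono; rewrite ?sqr_ge0 //; first by apply: divr_ge0; lra.
    rewrite /U /q; have := sqr_ge0 (1 - s); have := sqr_ge0 (1 - d); have := sqr_ge0 (s - d); nra.
  rewrite powRM; last by rewrite /q; nra.
    apply: ler_wpM2r; first exact: powR_ge0.
    by apply: ler_powR; lra.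
  lra.
have Hd : U `^ (p - 2) * d <= 3 `^ (p - 2) * X.
  by rewrite /X mulrA; apply: ler_wpM2r.
have [dS|dS] := lerP d S.
  have Hb : U `^ (p - 2) <= 3 `^ (p - 2) * S `^ (p - 2).
    apply: (@le_trans _ _ ((3 * S) `^ (p - 2))).
      apply: powR_mono => //; move: dS; rewrite /U /S; lra.
    by rewrite powRM //; rewrite /S; lra.
  have HS : S `^ (p - 2) * S = S `^ (p - 1).
    rewrite powR_S; last by rewrite /S; lra.
    by congr (_ `^ _); ring.
  have Hc : U `^ (p - 2) * (S * r) <= 3 `^ (p - 2) * Y.
    rewrite /Y -HS.
    have : U `^ (p - 2) * (S * r) <= 3 `^ (p - 2) * S `^ (p - 2) * (S * r).
      apply: ler_wpM2r => //; apply: mulr_ge0 => //; rewrite /S; lra.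
    move=> h; apply: (le_trans h); apply: eqle; ring.
  rewrite mulrDr.
  have : 3 `^ (p - 2) * X + 3 `^ (p - 2) * Y <= 2 * 3 `^ (p - 2) * (X + Y).
    have := powR_ge0 3 (p - 2); nra.
  move=> h; apply: le_trans h; exact: lerD.
have Hc : U `^ (p - 2) * (S * r) <= U `^ (p - 2) * d.
  apply: ler_wpM2l => //; rewrite /S in dS *; nra.
rewrite mulrDr.
have : 3 `^ (p - 2) * X + 3 `^ (p - 2) * X <= 2 * 3 `^ (p - 2) * (X + Y).
  have := powR_ge0 3 (p - 2); nra.
move=> h; apply: le_trans h; apply: lerD => //; exact: le_trans Hc Hd.
Qed.
End Key.

Section Fin.
Context {R : realType}.

Lemma final_ineq (p Q C0 A0 s d r z e0n e1n m1 Dn L : R) :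
  2 <= p -> 1 <= Q -> 0 <= C0 -> C0 <= Q -> A0 <= Q ->
  0 <= s -> 0 <= d -> 0 <= r -> r <= 1 -> 0 <= z ->
  0 <= e0n -> 0 <= e1n -> 0 <= m1 -> 0 <= Dn ->
  e0n <= Q * Q * (1 + s) -> e1n <= 2 * Q * Q * (d + (1 + s) * r) ->
  m1 <= Q * z -> Dn <= Q * r * z ->
  L <= C0 * (1 + e0n + e1n) `^ (p - 2) * e1n * m1 +
       (A0 * Dn + C0 * (1 + e0n) `^ (p - 2) * e0n * Dn) ->
  L <= 8 * Q ^+ 4 * (4 * Q * Q) `^ (p - 2) * 3 `^ (p - 2) *
       ((1 + s ^+ 2 + d ^+ 2) `^ ((p - 2) / 2) * d + r * (1 + s) `^ (p - 1)) * z.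
Proof.
move=> p2 Q1 C00 C0Q A0Q s0 d0 r0 r1 z0 e00 e10 m10 D0 He0 He1 Hm1 HD HL.
set U := 1 + s + d; set S := 1 + s.
set pi := (4 * Q * Q) `^ (p - 2); set u := U `^ (p - 2).
have p20 : 0 <= p - 2 by lra.
have QQ : 1 <= Q * Q by nra.
have pi1 : 1 <= pi by apply: powR_ge1'; nra.
have u1 : 1 <= u by apply: powR_ge1' => //; rewrite /U; lra.
have piu : pi * u = (4 * Q * Q * U) `^ (p - 2).
  by rewrite powRM //; [nra | rewrite /U; lra].
have h1 : (1 + e0n + e1n) `^ (p - 2) <= pi * u.
  rewrite piu; apply: powR_mono => //; first lra.
  have : e1n <= 2 * Q * Q * (d + S) by apply: (le_trans He1); rewrite /S; nra.
  rewrite /U /S in He0 *; nra.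
have h2 : (1 + e0n) `^ (p - 2) <= pi * u.
  rewrite piu; apply: powR_mono => //; first lra.
  rewrite /U /S in He0 *; nra.
have pu0 : 0 <= pi * u by nra.
set P1 := (1 + e0n + e1n) `^ (p - 2) in HL h1.
set P2 := (1 + e0n) `^ (p - 2) in HL h2.
have P10 : 0 <= P1 by apply: powR_ge0.
have P20 : 0 <= P2 by apply: powR_ge0.
have TA : C0 * P1 * e1n * m1 <= Q * (pi * u) * (2 * Q * Q * (d + S * r)) * (Q * z).
  apply: ler_pM => //; first by rewrite !mulr_ge0.
  apply: ler_pM => //; first by rewrite !mulr_ge0.
  by apply: ler_pM.
have TB1 : A0 * Dn <= Q * (Q * r * z).
  have : A0 * Dn <= Q * Dn by apply: ler_wpM2r.
  move=> h; apply: (le_trans h); apply: ler_wpM2l => //; lra.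
have TB2 : C0 * P2 * e0n * Dn <= Q * (pi * u) * (Q * Q * S) * (Q * r * z).
  apply: ler_pM => //; first by rewrite !mulr_ge0.
  apply: ler_pM => //; first by rewrite !mulr_ge0.
  by apply: ler_pM.
have S1 : 1 <= S by rewrite /S; lra.
have Hk := @key R p s d r p2 s0 d0 r0 r1.
rewrite -/U -/S -/u in Hk.
set XY := (1 + s ^+ 2 + d ^+ 2) `^ ((p - 2) / 2) * d + r * S `^ (p - 1) in Hk *.
set t3 := 3 `^ (p - 2) in Hk *.
have XY0 : 0 <= u * (d + S * r) by apply: mulr_ge0; nra.
have Q4 : Q ^+ 4 = Q * Q * (Q * Q) by ring.
rewrite Q4.
set q2 := Q * Q in QQ TA TB1 TB2 *.
have B : L <= 4 * q2 * q2 * pi * (u * (d + S * r)) * z.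
  apply: (le_trans HL).
  have E1 : Q * (pi * u) * (2 * Q * Q * (d + S * r)) * (Q * z) =
     2 * q2 * q2 * pi * (u * (d + S * r)) * z by rewrite /q2; ring.
  have E2 : Q * (pi * u) * (Q * Q * S) * (Q * r * z) =
     q2 * q2 * pi * u * S * r * z by rewrite /q2; ring.
  rewrite E1 in TA; rewrite E2 in TB2.
  have E3 : Q * (Q * r * z) = q2 * r * z by rewrite /q2; ring.
  rewrite E3 in TB1.
  have hq : q2 * r * z <= q2 * q2 * pi * u * S * r * z.
    have : 1 <= q2 * pi * u * S.
      have : 1 <= pi * u by nra.
      move=> h; have : 1 <= q2 * (pi * u) by nra.
      move=> h'; nra.
    move=> h; have h0 : 0 <= q2 * r * z by rewrite !mulr_ge0 //; lra.
    have := ler_wpM2l h0 h; rewrite mulr1 => h2'.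
    apply: (le_trans h2'); apply: eqle; ring.
  have : q2 * q2 * pi * u * S * r * z <= q2 * q2 * pi * (u * (d + S * r)) * z.
    have : u * S * r <= u * (d + S * r) by nra.
    move=> h; have h0 : 0 <= q2 * q2 * pi by rewrite !mulr_ge0 //; lra.
    have := ler_wpM2l h0 h; move=> h'.
    have := ler_wpM2r z0 h'; move=> h''; apply: (le_trans _ h''); apply: eqle; ring.
  move=> h5; nra.
apply: (le_trans B).
have : 4 * q2 * q2 * pi * (u * (d + S * r)) * z <=
       4 * q2 * q2 * pi * (2 * t3 * XY) * z.
  apply: ler_wpM2r => //; apply: ler_wpM2l => //; rewrite !mulr_ge0 //; lra.
move=> h; apply: (le_trans h); apply: eqle; ring.
Qed.
End Fin.

Section Hold.
Context {R : realType} {n : nat}.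

Lemma lastcB (u w : 'rV[R]_n) : lastc (u - w) = lastc u - lastc w.
Proof. by rewrite /lastc -sumrB; apply: eq_bigr => i _; rewrite !mxE. Qed.

Lemma lastcZ (c : R) (u : 'rV[R]_n) : lastc (c *: u) = c * lastc u.
Proof. by rewrite /lastc mulr_sumr; apply: eq_bigr => i _; rewrite !mxE. Qed.

Lemma lastc0 : lastc (0 : 'rV[R]_n) = 0.
Proof. by rewrite /lastc big1 // => i _; rewrite mxE. Qed.

Lemma exists_other (xo x : 'rV[R]_n) (rho : R) :
  0 < rho <= 1 -> 0 <= lastc xo -> halfball xo rho x ->
  exists y, halfball_cl xo rho y /\ y != xo.
Proof.
move=> /andP [r0 r1] l0 [hx1 hx2].
have [exo|nxo] := eqVneq x xo; last first.
  by exists x; split => //; split => //; apply: ltW.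
rewrite exo in hx2.
have xo0 : xo != 0 by apply/eqP => h; move: hx2; rewrite h lastc0 ltxx.
have f0 : 0 < fnorm xo by apply: fnorm_gt0.
set tau := rho / (2 * (fnorm xo + 1)).
have tau0 : 0 < tau by apply: divr_gt0 => //; lra.
have tau1 : tau <= 1 / 2.
  rewrite /tau ler_pdivrMr; last by lra.
  have : 1 / 2 * (2 * (fnorm xo + 1)) = fnorm xo + 1 by field.
  move=> ->; lra.
have taux : tau * fnorm xo <= rho.
  rewrite /tau mulrAC ler_pdivrMr; last by lra.
  nra.
exists (xo - tau *: xo); split; first split.
- rewrite addrAC subrr add0r fnormN fnormZ gtr0_norm //.
- rewrite lastcB lastcZ.
  have : tau * lastc xo <= lastc xo by nra.
  lra.
- apply/eqP => h; have h2 : - (tau *: xo) = 0.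
    by rewrite -[LHS]add0r -(subrr xo) addrAC h subrr.
  by move/eqP: h2; rewrite oppr_eq0 scaler_eq0 (gt_eqF tau0) (negbTE xo0).
Qed.

Lemma holder_bounds (m k : nat) (beta rho : R) (xo x : 'rV[R]_n)
  (v : 'rV[R]_n -> 'M[R]_(m, k)) (P : R) :
  0 < beta -> 0 < rho <= 1 -> 0 <= lastc xo ->
  holder_le beta (halfball_cl xo rho) v P -> halfball xo rho x ->
  [/\ 0 <= P, fnorm (v x) <= P, fnorm (v xo) <= P &
      fnorm (v x - v xo) <= P * rho `^ beta].
Proof.
move=> b0 hr l0 [M0 [M1 [HP [H0 H1]]]] hx.
have /andP [r0 r1] := hr.
have xcl : halfball_cl xo rho x by case: hx => h1 h2; split; apply: ltW.
have ocl : halfball_cl xo rho xo by split => //; rewrite subrr fnorm0; apply: ltW.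
have [y [ycl yo]] := exists_other xo x rho hr l0 hx.
have M10 : 0 <= M1.
  have := H1 y xo ycl ocl yo.
  have fy : 0 < fnorm (y - xo) by apply: fnorm_gt0; rewrite subr_eq0.
  have pb : 0 < fnorm (y - xo) `^ beta by apply: powR_gt0.
  move=> h; have := fnorm_ge0 (v y - v xo).
  move=> h'; have := le_trans h' h.
  by rewrite pmulr_lge0.
have hx0 := H0 x xcl; have ho := H0 xo ocl.
have M00 : 0 <= M0 by apply: le_trans ho; exact: fnorm_ge0.
have rb : 0 <= rho `^ beta by apply: powR_ge0.
split.
- lra.
- lra.
- lra.
- have [exo|nxo] := eqVneq x xo.
    rewrite exo subrr fnorm0; apply: mulr_ge0 => //; lra.
  apply: (le_trans (H1 x xo xcl ocl nxo)).
  have : fnorm (x - xo) `^ beta <= rho `^ beta.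
    case: hx => h1 _; apply: powR_mono; rewrite ?fnorm_ge0 //; [exact: ltW | exact: ltW].
  move=> h; apply: ler_pM => //; first by apply: powR_ge0.
  lra.
Qed.
End Hold.

Local Open Scope classical_set_scope.

Lemma fnormB3 (R : realType) (m k : nat) (A B C : 'M[R]_(m, k)) :
  fnorm (A - B) <= fnorm (A - C) + fnorm (C - B).
Proof.
have -> : A - B = (A - C) + (C - B) by rewrite addrA subrK.
exact: fnormD.
Qed.

Theorem lemma3p15 (R : realType) (N n : nat) (p K A0 W P Gm : R) :
  2 <= p -> 0 < K ->
  exists c : R, 0 < c /\
  forall (a : 'M[R]_(N, n) -> 'M[R]_(N, n)) (omega : R -> R)
         (beta rho : R) (xo : 'rV[R]_n)
         (Psi : 'rV[R]_n -> 'M[R]_n) (G : 'rV[R]_n -> 'M[R]_(N, n)),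
    (* a is C^1 *)
    (forall xi, differentiable a xi) ->
    (forall zeta, continuous (fun xi => ('d a xi : 'M[R]_(N, n) -> 'M[R]_(N, n)) zeta)) ->
    fnorm (a 0) <= A0 ->
    (* omega : [0,oo) -> [0,oo), bounded by W, omega(s) -> 0 as s -> oo *)
    (forall s, 0 <= s -> 0 <= omega s <= W) ->
    omega s @[s --> +oo] --> 0 ->
    (* |Da(xi) - Db(xi)| <= omega(|xi|) (1 + |xi|)^{p-2}  (operator norm) *)
    (forall xi zeta,
       fnorm (('d a xi : 'M[R]_(N, n) -> 'M[R]_(N, n)) zeta
              - ('d (bmap K p) xi : 'M[R]_(N, n) -> 'M[R]_(N, n)) zeta)
       <= omega (fnorm xi) * (1 + fnorm xi) `^ (p - 2) * fnorm zeta) ->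
    0 < beta < 1 -> 0 < rho <= 1 ->
    0 <= lastc xo ->
    holder_le beta (halfball_cl xo rho) Psi P ->
    holder_le beta (halfball_cl xo rho) G Gm ->
    forall (x : 'rV[R]_n) (xi xio zeta : 'M[R]_(N, n)),
      halfball xo rho x ->
      `| mxdot (a ((xi + G x) *m Psi x)) (zeta *m Psi x)
         - mxdot (a ((xio + G xo) *m Psi xo)) (zeta *m Psi xo) |
      <= c * ((1 + fnorm xio ^+ 2 + fnorm (xi - xio) ^+ 2) `^ ((p - 2) / 2)
                * fnorm (xi - xio)
              + rho `^ beta * (1 + fnorm xio) `^ (p - 1)) * fnorm zeta.
Proof.
move=> p2 K0.
set C0 := (K * (p - 1) + `|W|) * 2 `^ (p - 2).
set Q := 1 + `|P| + `|Gm| + `|A0| + C0.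
have p20 : 0 <= p - 2 by lra.
have C00 : 0 <= C0.
  apply: mulr_ge0; last exact: powR_ge0.
  apply: addr_ge0; [apply: mulr_ge0; lra | exact: normr_ge0].
have Q1 : 1 <= Q.
  have := normr_ge0 P; have := normr_ge0 Gm; have := normr_ge0 A0; rewrite /Q; lra.
exists (8 * Q ^+ 4 * (4 * Q * Q) `^ (p - 2) * 3 `^ (p - 2)); split.
  apply: mulr_gt0; last by apply: powR_gt0.
  apply: mulr_gt0; last by apply: powR_gt0; nra.
  apply: mulr_gt0 => //; apply: exprn_gt0; lra.
move=> a omega beta rho xo Psi G Ha Hc HA0 Hw _ Hd /andP [b0 b1] hr l0 HPsi HG
  x xi xio zeta hx.
have W0 : 0 <= W by have /andP[h1 h2] := Hw 0 (lexx 0); apply: le_trans h2.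
have HDA := @DA R N n a omega W K p K0 p2 Hc Hw Hd.
rewrite -(ger0_norm W0) -/C0 in HDA.
have HMV := @MVbound R N n a C0 p p2 C00 Ha HDA.
have [P0 Px Pxo Pd] := @holder_bounds R n _ _ beta rho xo x Psi P b0 hr l0 HPsi hx.
have [G0 Gx Gxo Gd] := @holder_bounds R n _ _ beta rho xo x G Gm b0 hr l0 HG hx.
have A00 : 0 <= A0 by apply: le_trans HA0; exact: fnorm_ge0.
have /andP [r0 r1] := hr.
set r := rho `^ beta.
have r00 : 0 <= r by apply: powR_ge0.
have r11 : r <= 1 by have := @powR_mono R rho 1 beta (ltW b0) (ltW r0) r1; rewrite powR1.
set s := fnorm xio; set d := fnorm (xi - xio); set z := fnorm zeta.
set e0 := (xio + G xo) *m Psi xo; set e1 := (xi + G x) *m Psi x.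
set M1 := zeta *m Psi x; set D := zeta *m (Psi x - Psi xo).
have HL : `|mxdot (a e1) M1 - mxdot (a e0) (zeta *m Psi xo)| <=
   C0 * (1 + fnorm e0 + fnorm (e1 - e0)) `^ (p - 2) * fnorm (e1 - e0) * fnorm M1 +
   (A0 * fnorm D + C0 * (1 + fnorm e0) `^ (p - 2) * fnorm e0 * fnorm D).
  have E : mxdot (a e1) M1 - mxdot (a e0) (zeta *m Psi xo) =
     (mxdot (a (e0 + (e1 - e0))) M1 - mxdot (a e0) M1) +
     ((mxdot (a (0 + e0)) D - mxdot (a 0) D) + mxdot (a 0) D).
    have -> : e0 + (e1 - e0) = e1 by rewrite addrC subrK.
    rewrite add0r subrK /D mulmxBr mxdotBr /M1; ring.
  rewrite E; apply: (le_trans (ler_normD _ _)); apply: lerD; first exact: HMV.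
  apply: (le_trans (ler_normD _ _)); rewrite addrC; apply: lerD.
    apply: (le_trans (mxdot_le _ _)); apply: ler_wpM2r; first exact: fnorm_ge0.
    exact: HA0.
  by have := HMV 0 e0 D; rewrite fnorm0 addr0.
have s0 : 0 <= s := fnorm_ge0 _.
have d0 : 0 <= d := fnorm_ge0 _.
have z0 : 0 <= z := fnorm_ge0 _.
have PQ : P <= Q by rewrite /Q ger0_norm //; have := normr_ge0 Gm; have := normr_ge0 A0; lra.
have GQ : Gm <= Q by rewrite /Q (ger0_norm G0); have := normr_ge0 P; have := normr_ge0 A0; lra.
have AQ : A0 <= Q by rewrite /Q (ger0_norm A00); have := normr_ge0 P; have := normr_ge0 Gm; lra.
have CQ : C0 <= Q by rewrite /Q; have := normr_ge0 P; have := normr_ge0 Gm; have := normr_ge0 A0; lra.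
have hG : fnorm (xio + G xo) <= s + Gm by apply: (le_trans (fnormD _ _)); exact: lerD (lexx _) Gxo.
have He0 : fnorm e0 <= (s + Gm) * P.
  apply: (le_trans (@fnorm_mul _ _ _ _ _ _)); apply: ler_pM => //; exact: fnorm_ge0.
have He1 : fnorm (e1 - e0) <= (d + Gm * r) * P + (s + Gm) * (P * r).
  apply: (le_trans (@fnormB3 _ _ _ _ _ ((xio + G xo) *m Psi x))); apply: lerD.
    rewrite /e1 -mulmxBl; apply: (le_trans (@fnorm_mul _ _ _ _ _ _)).
    apply: ler_pM => //; try exact: fnorm_ge0.
    have -> : xi + G x - (xio + G xo) = (xi - xio) + (G x - G xo).
      by rewrite opprD addrACA.
    apply: (le_trans (fnormD _ _)); apply: lerD => //.
  rewrite /e0 -mulmxBr; apply: (le_trans (@fnorm_mul _ _ _ _ _ _)).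
  by apply: ler_pM => //; exact: fnorm_ge0.
have Hm1 : fnorm M1 <= z * P.
  apply: (le_trans (@fnorm_mul _ _ _ _ _ _)); apply: ler_pM => //; exact: fnorm_ge0.
have HDn : fnorm D <= z * (P * r).
  apply: (le_trans (@fnorm_mul _ _ _ _ _ _)); apply: ler_pM => //; exact: fnorm_ge0.
clearbody Q C0 r s d z.
apply: (@final_ineq R p Q C0 A0 s d r z (fnorm e0) (fnorm (e1 - e0)) (fnorm M1) (fnorm D) _ p2 Q1 C00 CQ AQ s0 d0 r00 r11 z0 (fnorm_ge0 _) (fnorm_ge0 _)
   (fnorm_ge0 _) (fnorm_ge0 _) _ _ _ _ HL).
- apply: (le_trans He0).
  have h1 : (s + Gm) * P <= (s + Q) * Q by apply: ler_pM => //; lra.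
  apply: (le_trans h1).
  have h2 : s * Q <= s * (Q * Q) by apply: ler_wpM2l => //; nra.
  nra.
- apply: (le_trans He1).
  have hA : d * P <= d * Q by apply: ler_wpM2l.
  have hB : Gm * r * P <= Q * r * Q by apply: ler_pM => //; [exact: mulr_ge0 | exact: ler_wpM2r].
  have hC : s * (P * r) <= s * (Q * r) by apply: ler_wpM2l => //; exact: ler_wpM2r.
  have hD : Gm * (P * r) <= Q * (Q * r) by apply: ler_pM => //; [exact: mulr_ge0 | exact: ler_wpM2r].
  have hE : d * Q <= 2 * Q * Q * d.
    have hq : 0 <= d * Q by apply: mulr_ge0 => //; lra.
    have := ler_wpM2l hq Q1; rewrite mulr1 => h; apply: (le_trans h).
    have h' : 0 <= d * Q * Q by apply: mulr_ge0 => //; lra.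
    have E : 2 * Q * Q * d = d * Q * Q + d * Q * Q by ring.
    rewrite E; lra.
  have hF : s * (Q * r) <= Q * Q * s * r.
    have QQ : Q <= Q * Q by have := ler_wpM2l (ltW (lt_le_trans ltr01 Q1)) Q1; rewrite mulr1.
    have : s * r * Q <= s * r * (Q * Q) by apply: ler_wpM2l; [exact: mulr_ge0 | exact: QQ].
    move=> h; apply: (le_trans _ (le_trans h _)); apply: eqle; ring.
  have hGG : 0 <= Q * Q * s * r.
    by apply: mulr_ge0 => //; apply: mulr_ge0 => //; apply: mulr_ge0; lra.
  have E : (d + Gm * r) * P + (s + Gm) * (P * r) =
     d * P + Gm * r * P + s * (P * r) + Gm * (P * r) by ring.
  have E2 : 2 * Q * Q * (d + (1 + s) * r) =
     2 * Q * Q * d + Q * r * Q + Q * (Q * r) + 2 * (Q * Q * s * r) by ring.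
  rewrite E E2; lra.
- apply: (le_trans Hm1); rewrite mulrC; apply: ler_wpM2r => //.
- apply: (le_trans HDn).
  have : P * r <= Q * r by apply: ler_wpM2r.
  move=> h; have := ler_wpM2l z0 h; move=> h'; apply: (le_trans h').
  apply: eqle; ring.
Qed.
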